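(* Let $X$ be countable, $K:X\times X\to\mathbb{C}$ positive definite with $\delta_x\in\mathscr{H}(K)$ for all $x\in X$, and let $F_1\subset F_2\subset\cdots$ be finite subsets with $\bigcup_iF_i=X$. Then a function $h$ on $X$ belongs to $\mathscr{H}(K)$ if and only if $\sup_i\|K_{F_i}^{-1/2}h|_{F_i}\|_{\ell^2(F_i)}<\infty$. Moreover, for $h\in\mathscr{H}(K)$, $\|h\|^2_{\mathscr{H}(K)}=\lim_{i\to\infty}\|K_{F_i}^{-1/2}h|_{F_i}\|^2_{\ell^2(F_i)}$, where the sequence $\|K_{F_i}^{-1/2}h|_{F_i}\|^2_{\ell^2(F_i)}$ is monotone nondecreasing.
   Context: $\delta_x$ is the function on $X$ equal to $1$ at $x$ and $0$ elsewhere; $\mathscr{H}(K)$ is the reproducing kernel Hilbert space of $K$ (completion of span of $K(\cdot,x)$, $\langle K(\cdot,x),K(\cdot,y)\rangle=K(x,y)$, $\langle K(\cdot,x),h\rangle=h(x)$). $K_F=(K(x,y))_{x,y\in F}$ for finite $F$; under the assumption it is positive and invertible, and $K_F^{-1/2}$ is defined by the spectral theorem. *)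

(* Defs.v *)
From HB Require Import structures.
From Stdlib Require Import ClassicalEpsilon.
From mathcomp Require Import all_boot all_order all_algebra.
From mathcomp Require Import finmap.
From mathcomp Require Import complex.
From mathcomp Require Import all_classical all_reals topology normedtype sequences.
Set Implicit Arguments. Unset Strict Implicit. Unset Printing Implicit Defensive.
Import Order.TTheory GRing.Theory Num.Theory.
Import numFieldNormedType.Exports.
Local Open Scope ring_scope.
Local Open Scope classical_set_scope.
Local Open Scope ring_scope.
Local Open Scope complex_scope.

Section RKHS.
Variable R : realType.
Variable X : choiceType.
Notation C := R[i].
Variable K : X -> X -> C.

(** Positive definite kernel (in the sense of the paper: positive
    semidefinite Gram matrices): for all finite families of points and
    coefficients, sum_{i,j} conj(c_i) c_j K(x_i,x_j) >= 0. *)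
Definition pos_def_kernel : Prop :=
  forall (n : nat) (x : 'I_n -> X) (c : 'I_n -> C),
    0 <= \sum_(i < n) \sum_(j < n) (c i)^* * c j * K (x i) (x j).

(** Elements of span{K(.,x)} : finite lists of (point, coefficient),
    representing  sum_p p.2 K(.,p.1). *)
Definition span_elt := seq (X * C).

Definition span_eval (s : span_elt) (z : X) : C :=
  \sum_(p <- s) p.2 * K z p.1.

(** ||s||^2 in the pre-Hilbert space, using <K(.,x),K(.,y)> = K(x,y). *)
Definition span_norm2 (s : span_elt) : C :=
  \sum_(p <- s) \sum_(q <- s) (p.2)^* * q.2 * K p.1 q.1.

Definition span_sub (s t : span_elt) : span_elt :=
  s ++ [seq (p.1, - p.2) | p <- t].

Definition span_cauchy (f : nat -> span_elt) : Prop :=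
  forall e : R, 0 < e -> exists N : nat, forall m n : nat, (N <= m)%N -> (N <= n)%N ->
    complex.Re (span_norm2 (span_sub (f m) (f n))) < e.

Definition span_pointwise (f : nat -> span_elt) (h : X -> C) : Prop :=
  forall z : X, forall e : R, 0 < e -> exists N : nat, forall n : nat, (N <= n)%N ->
    `|span_eval (f n) z - h z| < e%:C.

(** H(K): the completion of span{K(.,x)}, realized (as usual) as the
    functions on X that are pointwise limits of Cauchy sequences in the span. *)
Definition in_rkhs (h : X -> C) : Prop :=
  exists f : nat -> span_elt, span_cauchy f /\ span_pointwise f h.

Definition rkhs_norm2_is (h : X -> C) (r : R) : Prop :=
  exists f : nat -> span_elt, [/\ span_cauchy f, span_pointwise f h &
    (fun n => complex.Re (span_norm2 (f n))) @ \oo --> r].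

End RKHS.

Definition delta {R : realType} {X : eqType} (x : X) : X -> R[i] :=
  fun z => if z == x then 1 else 0.

Definition conjT {R : realType} {n : nat} (U : 'M[R[i]]_n) : 'M[R[i]]_n :=
  map_mx (fun z => z^*) U^T.

Definition unitary_mx {R : realType} {n : nat} (U : 'M[R[i]]_n) : Prop :=
  U *m conjT U = 1%:M /\ conjT U *m U = 1%:M.

Definition spectral_pos {R : realType} {n : nat} (M U : 'M[R[i]]_n) (d : 'I_n -> R) : Prop :=
  [/\ unitary_mx U, (forall i, 0 < d i) &
      M = U *m diag_mx (\row_i (d i)%:C) *m conjT U].

(** M^{-1/2} := U diag(d^{-1/2}) U^*, defined by the spectral theorem
    (chosen by classical description; 0 if M is not positive invertible). *)
Definition inv_sqrt_mx {R : realType} {n : nat} (M : 'M[R[i]]_n) : 'M[R[i]]_n :=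
  epsilon (inhabits 0) (fun S => exists U d, spectral_pos M U d /\
     S = U *m diag_mx (\row_i ((Num.sqrt (d i))^-1)%:C) *m conjT U).

Definition l2norm2 {R : realType} {n : nat} (v : 'cV[R[i]]_n) : R :=
  complex.Re (\sum_(i < n) `|v i 0| ^+ 2).

Definition fpt {X : choiceType} (F : {fset X}) (i : 'I_(size (enum_fset F))) : X :=
  tnth (in_tuple (enum_fset F)) i.

Definition kernel_mx {R : realType} {X : choiceType} (K : X -> X -> R[i]) (F : {fset X})
  : 'M[R[i]]_(size (enum_fset F)) :=
  \matrix_(i, j) K (fpt i) (fpt j).

Definition restr_vec {R : realType} {X : choiceType} (h : X -> R[i]) (F : {fset X})
  : 'cV[R[i]]_(size (enum_fset F)) :=
  \col_i h (fpt i).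

Definition approx_norm2 {R : realType} {X : choiceType} (K : X -> X -> R[i])
  (F : {fset X}) (h : X -> R[i]) : R :=
  l2norm2 (inv_sqrt_mx (kernel_mx K F) *m restr_vec h F).

(* Main.v *)
Require Import Defs.
From HB Require Import structures.
From Stdlib Require Import ClassicalEpsilon.
From mathcomp Require Import all_boot all_order all_algebra.
From mathcomp Require Import finmap.
From mathcomp Require Import complex.
From mathcomp Require Import all_classical all_reals topology normedtype sequences.
From mathcomp Require Import sesquilinear spectral.
From mathcomp Require Import ring lra.
Import Order.TTheory GRing.Theory Num.Theory.
Import numFieldNormedType.Exports.
Local Open Scope classical_set_scope.
Local Open Scope complex_scope.
Local Open Scope ring_scope.
Set Implicit Arguments. Unset Strict Implicit. Unset Printing Implicit Defensive.
Section Span.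
Variable R : realType.
Variable X : choiceType.
Variable K : X -> X -> R[i].
Local Notation C := R[i].

Definition ip (s t : span_elt R X) : C :=
  \sum_(p <- s) \sum_(q <- t) (p.2)^* * q.2 * K p.1 q.1.
Definition negs (s : span_elt R X) : span_elt R X := [seq (p.1, - p.2) | p <- s].
Definition scal (a : C) (s : span_elt R X) : span_elt R X := [seq (p.1, a * p.2) | p <- s].

Lemma norm2E s : span_norm2 K s = ip s s. Proof. by []. Qed.

Lemma ip_catl s1 s2 t : ip (s1 ++ s2) t = ip s1 t + ip s2 t.
Proof. by rewrite /ip big_cat. Qed.

Lemma ip_catr s t1 t2 : ip s (t1 ++ t2) = ip s t1 + ip s t2.
Proof. by rewrite /ip -big_split; apply: eq_bigr => p _; rewrite big_cat. Qed.

Lemma ip_negl s t : ip (negs s) t = - ip s t.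
Proof.
rewrite /ip big_map -sumrN; apply: eq_bigr => p _ /=; rewrite -sumrN.
by apply: eq_bigr => q _; rewrite rmorphN /= !mulNr.
Qed.

Lemma ip_negr s t : ip s (negs t) = - ip s t.
Proof.
rewrite /ip -sumrN; apply: eq_bigr => p _ /=; rewrite big_map -sumrN.
by apply: eq_bigr => q _ /=; rewrite mulrN !mulNr.
Qed.

Lemma ip_scall a s t : ip (scal a s) t = a^* * ip s t.
Proof.
rewrite /ip big_map mulr_sumr; apply: eq_bigr => p _ /=; rewrite mulr_sumr.
by apply: eq_bigr => q _; rewrite rmorphM /= !mulrA.
Qed.

Lemma ip_scalr a s t : ip s (scal a t) = a * ip s t.
Proof.
rewrite /ip mulr_sumr; apply: eq_bigr => p _ /=; rewrite big_map mulr_sumr.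
by apply: eq_bigr => q _ /=; ring.
Qed.

Lemma norm_sub s t :
  span_norm2 K (span_sub s t) = ip s s - ip s t - ip t s + ip t t.
Proof.
rewrite norm2E /span_sub -/(negs t) ip_catl !ip_catr !ip_negl !ip_negr opprK; ring.
Qed.

Lemma ip_eval s t : ip s t = \sum_(p <- s) (p.2)^* * span_eval K t p.1.
Proof.
rewrite /ip; apply: eq_bigr => p _; rewrite /span_eval mulr_sumr.
by apply: eq_bigr => q _; rewrite mulrA.
Qed.

Hypothesis Kherm : forall x y, K y x = (K x y)^*.

Lemma ipC s t : ip t s = (ip s t)^*.
Proof.
rewrite /ip exchange_big rmorph_sum; apply: eq_bigr => p _ /=.
rewrite rmorph_sum; apply: eq_bigr => q _ /=.
rewrite !rmorphM /= conjCK Kherm.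
by congr (_ * _); apply: mulrC.
Qed.

End Span.
Section Herm.
Variable R : realType.
Variable X : choiceType.
Variable K : X -> X -> R[i].
Hypothesis pdK : pos_def_kernel K.

Lemma pd2 x y (c1 c2 : R[i]) :
  0 <= c1^* * c1 * K x x + c1^* * c2 * K x y + (c2^* * c1 * K y x + c2^* * c2 * K y y).
Proof.
have := pdK (fun i : 'I_2 => if val i == 0%N then x else y)
            (fun i : 'I_2 => if val i == 0%N then c1 else c2).
by rewrite !big_ord_recl !big_ord0 /= !addr0.
Qed.

Lemma Kherm x y : K y x = (K x y)^*.
Proof.
have ha := pd2 x y 1 0; have hb := pd2 x y 0 1.
have h1 := pd2 x y 1 1; have h2 := pd2 x y 1 'i%C.
move: ha hb h1 h2; case: (K x x) => a1 a2; case: (K y y) => b1 b2.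
case: (K x y) => u1 u2; case: (K y x) => v1 v2.
rewrite !lecE /=.
move=> /andP[/eqP ha _] /andP[/eqP hb _] /andP[/eqP h1 _] /andP[/eqP h2 _].
by congr (_ +i* _)%C; lra.
Qed.
End Herm.
Section Pos.
Variable R : realType.
Variable X : choiceType.
Variable K : X -> X -> R[i].
Hypothesis pdK : pos_def_kernel K.
Lemma ip_ge0 s : 0 <= ip K s s.
Proof.
rewrite /ip big_tnth.
under eq_bigr do rewrite big_tnth.
exact: (pdK (fun i => (tnth (in_tuple s) i).1) (fun i => (tnth (in_tuple s) i).2)).
Qed.
End Pos.
Section LA.
Variable R : realType.
Variable X : choiceType.
Variable K : X -> X -> R[i].
Local Open Scope sesquilinear_scope.
Hypothesis pdK : pos_def_kernel K.
Variable F : {fset X}.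
Local Notation n := (size (enum_fset F)).
Local Notation M := (kernel_mx K F).
Hypothesis Mu : M \in unitmx.

Lemma conjTE m (A : 'M[R[i]]_m) : conjT A = A ^t*.
Proof. by []. Qed.

Lemma M_herm : M \is hermsymmx.
Proof.
apply/is_hermitianmxP; rewrite expr0 scale1r; apply/matrixP => a b.
by rewrite !mxE (Kherm pdK).
Qed.

Let P := spectralmx M.
Let D := spectral_diag M.
Lemma P_unitary : P \is unitarymx. Proof. exact: spectral_unitarymx. Qed.
Lemma M_spec : M = P ^t* *m diag_mx D *m P.
Proof.
rewrite -invmx_unitary ?P_unitary //.
exact/orthomx_spectralP/hermitian_normalmx/M_herm.
Qed.

Lemma D_diag : P *m M *m P ^t* = diag_mx D.
Proof.
rewrite M_spec -invmx_unitary ?P_unitary // !mulmxA mulmxV ?spectral_unit // mul1mx.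
by rewrite -mulmxA mulmxV ?spectral_unit // mulmx1.
Qed.

Lemma D_ge0 k : 0 <= D 0 k.
Proof.
have := congr1 (fun A : 'M[R[i]]_n => A k k) D_diag; rewrite [diag_mx D k k]mxE eqxx mulr1n => <-.
have := pdK (@fpt X F) (fun a => (P k a)^*).
congr (_ <= _); rewrite mxE exchange_big; apply: eq_bigr => j _ /=.
rewrite mxE mulr_suml; apply: eq_bigr => i _; rewrite !mxE.
by rewrite conjCK mulrAC.
Qed.
Lemma D_neq0 k : D 0 k != 0.
Proof.
apply/negP => /eqP Dk; move: Mu; rewrite unitmxE unitfE M_spec !det_mulmx det_diag.
by rewrite (bigD1 k) //= Dk mul0r mulr0 mul0r eqxx.
Qed.

Lemma D_gt0 k : 0 < D 0 k.
Proof. by rewrite lt0r D_neq0 D_ge0. Qed.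

Lemma D_real k : D 0 k = (complex.Re (D 0 k))%:C /\ 0 < complex.Re (D 0 k).
Proof.
have := D_gt0 k; case: (D 0 k) => a b; rewrite ltcE /= => /andP[/eqP -> ->].
by split.
Qed.

Lemma conjT_mul m (A B : 'M[R[i]]_m) : conjT (A *m B) = conjT B *m conjT A.
Proof. by rewrite !conjTE trmx_mul map_mxM. Qed.

Lemma conjTK m (A : 'M[R[i]]_m) : conjT (conjT A) = A.
Proof. by rewrite !conjTE trmxCK. Qed.

Lemma conjR (r : R) : Num.conj (r%:C : R[i]) = r%:C.
Proof. exact: conjc_real. Qed.

Lemma conjT_diag m (r : 'I_m -> R) :
  conjT (diag_mx (\row_i (r i)%:C)) = diag_mx (\row_i (r i)%:C).
Proof.
apply/matrixP => a b; rewrite !conjTE !mxE.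
case: (eqVneq a b) => [->|ne]; first by rewrite !mulr1n conjR.
by rewrite !mulr0n rmorph0.
Qed.

Lemma spec_exists : exists U d, spectral_pos M U d.
Proof.
exists (P ^t*), (fun k => complex.Re (D 0 k)); split.
- rewrite /unitary_mx conjTE trmxCK; split; first by rewrite -invmx_unitary ?P_unitary // mulVmx // spectral_unit.
  exact/unitarymxP/P_unitary.
- by move=> k; case: (D_real k).
- rewrite conjTE trmxCK {1}M_spec; congr (_ *m diag_mx _ *m _).
  by apply/rowP => k; rewrite mxE -(proj1 (D_real k)).
Qed.

Let S := inv_sqrt_mx M.

Lemma S_spec : exists U d, spectral_pos M U d /\
  S = U *m diag_mx (\row_i ((Num.sqrt (d i))^-1)%:C) *m conjT U.
Proof.
rewrite /S /inv_sqrt_mx; apply: (epsilon_spec (inhabits 0) (fun S0 => exists U d, spectral_pos M U d /\ S0 = _)).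
have [U [d sp]] := spec_exists; by exists (U *m diag_mx (\row_i ((Num.sqrt (d i))^-1)%:C) *m conjT U), U, d.
Qed.

Lemma S_herm : conjT S = S.
Proof.
have [U [d [_ ->]]] := S_spec.
by rewrite !conjT_mul conjTK conjT_diag mulmxA.
Qed.

Lemma SS : S *m S = invmx M.
Proof.
have [U [d [[[UU UU'] dpos ME] ->]]] := S_spec.
have E : M *m (U *m diag_mx (\row_i ((Num.sqrt (d i))^-1)%:C) *m conjT U *m
           (U *m diag_mx (\row_i ((Num.sqrt (d i))^-1)%:C) *m conjT U)) = 1%:M.
  rewrite ME !mulmxA -[_ *m conjT U *m U]mulmxA UU' mulmx1.
  rewrite -[_ *m conjT U *m U]mulmxA UU' mulmx1.
  rewrite -!mulmxA [diag_mx _ *m (diag_mx _ *m _)]mulmxA mulmx_diag.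
  rewrite [diag_mx _ *m (diag_mx _ *m _)]mulmxA mulmx_diag.
  rewrite (_ : diag_mx _ = 1%:M); first by rewrite mul1mx.
  rewrite -diag_const_mx; congr diag_mx; apply/rowP => k; rewrite !mxE.
  have dk := dpos k; rewrite -!rmorphM /=; congr (_%:C).
  rewrite -mulrA -expr2 exprVn sqr_sqrtr ?ltW // mulfV //; exact: lt0r_neq0.
by rewrite -[LHS](mulKmx Mu) E mulmx1.
Qed.
Lemma ReJ (z : R[i]) : complex.Re (z^*) = complex.Re z.
Proof. by case: z. Qed.

Variable h : X -> R[i].
Let v := restr_vec h F.
Let c := invmx M *m v.

Lemma approxE : approx_norm2 K F h = complex.Re (\sum_k (h (fpt k))^* * c k 0).
Proof.
rewrite /approx_norm2 -/S /l2norm2; congr complex.Re.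
have -> : \sum_k `|(S *m v) k 0| ^+ 2 = ((S *m v)^t* *m (S *m v)) 0 0.
  by rewrite mxE; apply: eq_bigr => k _; rewrite normCK mulrC !mxE.
rewrite trmx_mul map_mxM -conjTE S_herm mulmxA -[_ *m S *m S]mulmxA SS -mulmxA -/c.
by rewrite mxE; apply: eq_bigr => k _; rewrite !mxE.
Qed.

Let G : span_elt R X := [seq (fpt k, c k 0) | k <- index_enum 'I_n].

Lemma G_evalE z : span_eval K G z = \sum_k c k 0 * K z (fpt k).
Proof. by rewrite /span_eval big_map. Qed.

Lemma G_eval (j : 'I_n) : span_eval K G (fpt j) = h (fpt j).
Proof.
rewrite G_evalE.
have : (M *m c) j 0 = v j 0 by rewrite /c mulKVmx.
rewrite !mxE => <-; apply: eq_bigr => k _; rewrite !mxE mulrC.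
by [].
Qed.

Lemma fpt_in (j : 'I_n) : fpt j \in F.
Proof. exact: mem_tnth. Qed.

Lemma fpt_onto z : z \in F -> exists j : 'I_n, fpt j = z.
Proof.
move=> zF; have zs : z \in enum_fset F by [].
have zi : (index z (enum_fset F) < n)%N by rewrite index_mem.
exists (Ordinal zi).
by rewrite /fpt (tnth_nth z) /= nth_index.
Qed.

Lemma G_norm : complex.Re (span_norm2 K G) = approx_norm2 K F h.
Proof.
rewrite approxE norm2E ip_eval /G big_map -ReJ rmorph_sum; congr complex.Re.
apply: eq_bigr => k _ /=; rewrite G_eval rmorphM /= conjCK mulrC.
by [].
Qed.

Lemma G_supp p : p \in G -> p.1 \in F.
Proof. by case/mapP => k _ -> /=; exact: fpt_in. Qed.

Lemma interp : exists G : span_elt R X,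
  [/\ forall p, p \in G -> p.1 \in F,
      forall z, z \in F -> span_eval K G z = h z &
      complex.Re (span_norm2 K G) = approx_norm2 K F h].
Proof.
exists G; split; [exact: G_supp | | exact: G_norm].
by move=> z /fpt_onto [j <-]; exact: G_eval.
Qed.

End LA.
Definition CC (R : realType) : numFieldType := R[i].

Section Lim.
Variable R : realType.
Variable X : choiceType.
Variable K : X -> X -> R[i].

Lemma pos_c (e : R[i]) : 0 < e -> e = (complex.Re e)%:C /\ 0 < complex.Re e.
Proof. by case: e => a b; rewrite ltcE /= => /andP[/eqP -> ->]. Qed.

Lemma pw_cvg f h : span_pointwise K f h -> forall z,
  (fun n => span_eval K (f n) z : CC R) @ \oo --> (h z : CC R).
Proof.
move=> pw z; apply/cvgrPdist_lt => e e0.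
have [-> ep] := pos_c e0.
have [N HN] := pw z _ ep.
near=> n; have nN : (N <= n)%N by near: n; exact: nbhs_infty_ge.
by rewrite distrC; apply: HN.
Unshelve. all: by end_near.
Qed.

Lemma Re_cvg (u : nat -> CC R) (l : CC R) : u @ \oo --> l ->
  (fun n => complex.Re (u n)) @ \oo --> complex.Re l.
Proof.
move=> ul; apply/cvgrPdist_lt => e e0.
move/cvgrPdist_lt: ul => /(_ e%:C); rewrite ltcR => /(_ e0).
apply: filterS => n.
have -> : complex.Re l - complex.Re (u n) = complex.Re (l - u n).
  by case: l; case: (u n) => a b c d /=.
move: (l - u n) => z; rewrite normc_def ltcR; apply: le_lt_trans.
case: z => a b /=; rewrite -sqrtr_sqr; apply: ler_wsqrtr.
by rewrite lerDl sqr_ge0.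
Qed.

Lemma sum_cvg (T : Type) (s : seq T) (g : T -> nat -> CC R) (l : T -> CC R) :
  (forall p, g p @ \oo --> l p) ->
  (fun n => \sum_(p <- s) g p n) @ \oo --> \sum_(p <- s) l p.
Proof.
move=> gl; elim: s => [|p s IH].
  rewrite big_nil (_ : (fun n => _) = (fun _ => 0)); first exact: cvg_cst.
  by apply: funext => n; rewrite big_nil.
rewrite big_cons (_ : (fun n => _) = g p + (fun n => \sum_(q <- s) g q n)).
  exact: (cvgD (gl p) IH).
by apply: funext => n; rewrite big_cons.
Qed.

Lemma ip_lim f h s : span_pointwise K f h ->
  (fun n => ip K s (f n) : CC R) @ \oo --> (\sum_(p <- s) (p.2)^* * h p.1 : CC R).
Proof.
move=> pw.
have -> : (fun n => ip K s (f n) : CC R) = (fun n => \sum_(p <- s) (p.2)^* * span_eval K (f n) p.1 : CC R).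
  by apply: funext => n; rewrite ip_eval.
apply: sum_cvg => p.
apply: (@cvgM _ _ _ _ (fun _ => (p.2)^* : CC R) (fun n => span_eval K (f n) p.1 : CC R)).
  exact: cvg_cst.
exact: pw_cvg.
Qed.
End Lim.
Section Null.
Variable R : realType.
Variable X : choiceType.
Variable K : X -> X -> R[i].
Hypothesis pdK : pos_def_kernel K.

Lemma ge0_Re (z : R[i]) : 0 <= z -> 0 <= complex.Re z.
Proof. by case: z => a b; rewrite lecE /= => /andP[_]. Qed.

Lemma ReD (x y : R[i]) : complex.Re (x + y) = complex.Re x + complex.Re y.
Proof. by case: x; case: y. Qed.

Lemma lin_zero (A x : R) : (forall l : R, 0 <= A + l * x) -> x = 0.
Proof.
move=> H; case: (eqVneq x 0) => // nx.
have := H (- (A + 1) / x); rewrite divfK //; lra.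
Qed.

Lemma null_ip s : ip K s s = 0 -> forall t, ip K t s = 0.
Proof.
move=> s0 t.
have key : forall a : R[i], 0 <= complex.Re (ip K t t) + complex.Re (a * ip K t s + (a * ip K t s)^*).
  move=> a; have := ge0_Re (ip_ge0 pdK (t ++ scal a s)).
  rewrite !ip_catl !ip_catr !ip_scall !ip_scalr s0 !mulr0 addr0 (ipC (Kherm pdK) t s).
  by rewrite -rmorphM -addrA ReD.
move: key; case: (ip K t s) => x y key.
have hx : 2 * x = 0.
  apply: (@lin_zero (complex.Re (ip K t t))) => l; have := key (l%:C).
  by rewrite /= !mul0r !subr0; lra.
have hy : 2 * y = 0.
  apply: (@lin_zero (complex.Re (ip K t t))) => l; have := key ((- l)%:C * 'i%C).
  by rewrite /= !mul0r; lra.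
by congr (_ +i* _)%C; lra.
Qed.

Lemma fpt_inj (F : {fset X}) : injective (@fpt X F).
Proof. by apply/tuple_uniqP; exact: fset_uniq. Qed.

Lemma Munit (dl : forall x, in_rkhs K (delta x)) (F : {fset X}) :
  kernel_mx K F \in unitmx.
Proof.
rewrite unitmxE unitfE; apply/negP => /det0P [v vn0 vM].
pose s : span_elt R X :=
  [seq (@fpt X F a, (v 0 a)^*) | a <- index_enum 'I_(size (enum_fset F))].
have ev : forall z, span_eval K s z = (\sum_a v 0 a * K (fpt a) z)^*.
  move=> z; rewrite /span_eval big_map rmorph_sum; apply: eq_bigr => a _ /=.
  by rewrite rmorphM /= (Kherm pdK (fpt a) z).
have ev0 : forall b : 'I_(size (enum_fset F)), span_eval K s (fpt b) = 0.
  move=> b; have : (v *m kernel_mx K F) 0 b = 0 by rewrite vM mxE.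
  rewrite mxE => E; rewrite ev (_ : \sum_a _ = 0) ?rmorph0 //.
  rewrite -[RHS]E; by apply: eq_bigr => a _; rewrite mxE.
have n0 : ip K s s = 0.
  by rewrite ip_eval /s big_map big1 // => a _; rewrite ev0 mulr0.
have z0 : forall t, ip K s t = 0.
  by move=> t; rewrite (ipC (Kherm pdK) t s) null_ip // rmorph0.
move/eqP: vn0; apply; apply/rowP => a0; rewrite mxE.
have [f [_ pw]] := dl (fpt a0).
have L := ip_lim (s := s) pw.
rewrite (_ : (fun n => _) = (fun _ => 0)) in L; last by apply: funext => n; rewrite z0.
have := cvg_lim (@norm_hausdorff _ _) L; rewrite lim_cst; last exact: norm_hausdorff.
rewrite /s big_map (bigD1 a0) //= big1 ?addr0.
  by move=> /(_ ltac:(typeclasses eauto)); rewrite /delta eqxx mulr1 conjCK.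
move=> a na; rewrite /delta; case: eqP; last by rewrite mulr0.
by move/fpt_inj => E; rewrite E eqxx in na.
Qed.
End Null.
Section Main.
Variable R : realType.
Variable X : choiceType.
Variable K : X -> X -> R[i].
Hypothesis pdK : pos_def_kernel K.
Hypothesis dl : forall x, in_rkhs K (delta x).
Variable F : nat -> {fset X}.
Hypothesis Fs : forall i, (F i `<=` F i.+1)%fset.
Hypothesis Fcov : forall x, exists i, x \in F i.
Variable h : X -> R[i].

Let Kh := Kherm pdK.
Definition nrm (s : span_elt R X) := complex.Re (span_norm2 K s).
Definition Lh (s : span_elt R X) := \sum_(p <- s) (p.2)^* * h p.1.

Lemma ReN (x : R[i]) : complex.Re (- x) = - complex.Re x.
Proof. by case: x. Qed.

Lemma ipR_sym s t : complex.Re (ip K t s) = complex.Re (ip K s t).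
Proof. by rewrite (ipC Kh) ReJ. Qed.

Lemma nrm_sub s t : nrm (span_sub s t) = nrm s - 2 * complex.Re (ip K s t) + nrm t.
Proof.
rewrite /nrm norm_sub !ReD !ReN (ipR_sym s t) !norm2E; lra.
Qed.

Lemma nrm_ge0 s : 0 <= nrm s.
Proof. exact: ge0_Re (ip_ge0 pdK s). Qed.

Lemma key_u s t : 2 * complex.Re (ip K s t) - nrm s = nrm t - nrm (span_sub t s).
Proof. rewrite nrm_sub (ipR_sym t s); lra. Qed.

Lemma ip_supp (G : span_elt R X) (E : {fset X}) s :
  (forall z, z \in E -> span_eval K G z = h z) -> (forall p, p \in s -> p.1 \in E) ->
  ip K s G = Lh s.
Proof.
by move=> GE sE; rewrite ip_eval; apply: eq_big_seq => p ps; rewrite GE // sE.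
Qed.

Lemma V1 (G : span_elt R X) (E : {fset X}) s :
  (forall z, z \in E -> span_eval K G z = h z) -> (forall p, p \in s -> p.1 \in E) ->
  2 * complex.Re (Lh s) - nrm s <= nrm G.
Proof.
move=> GE sE; have := nrm_ge0 (span_sub G s); rewrite nrm_sub -(ipR_sym G s).
rewrite (ip_supp GE sE); lra.
Qed.

Lemma V2 (G : span_elt R X) (E : {fset X}) :
  (forall z, z \in E -> span_eval K G z = h z) -> (forall p, p \in G -> p.1 \in E) ->
  nrm G = 2 * complex.Re (Lh G) - nrm G.
Proof.
move=> GE sE; rewrite -(ip_supp GE sE) -norm2E; rewrite /nrm; lra.
Qed.

Lemma Fmono i j : (i <= j)%N -> (F i `<=` F j)%fset.
Proof.
move=> ij; rewrite -(subnKC ij); elim: (j - i)%N => [|k IH].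
  by rewrite addn0 fsubset_refl.
by rewrite addnS; apply: fsubset_trans IH (Fs _).
Qed.

Definition a i := approx_norm2 K (F i) h.

Lemma interpF i : exists G : span_elt R X,
  [/\ forall p, p \in G -> p.1 \in F i,
      forall z, z \in F i -> span_eval K G z = h z & nrm G = a i].
Proof. by have [G [? ? ?]] := interp pdK (Munit pdK dl (F i)) h; exists G. Qed.

Lemma a_mono : {homo a : m n / (m <= n)%N >-> m <= n}.
Proof.
move=> m n mn.
have [Gm [Ms Mi <-]] := interpF m.
have [Gn [Ns Ni <-]] := interpF n.
rewrite (V2 Mi Ms); apply: (V1 Ni) => p /Ms; exact/fsubsetP/Fmono.
Qed.


Lemma lim_u f s (pw : span_pointwise K f h) :
  (fun m => 2 * complex.Re (ip K s (f m)) - nrm s) @ \oo --> 2 * complex.Re (Lh s) - nrm s.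
Proof.
have H := Re_cvg (ip_lim (s := s) pw).
rewrite (_ : (fun m => _) = (fun m => 2 * complex.Re (ip K s (f m))) - (fun _ => nrm s));
  last by apply: funext.
apply: cvgB; last exact: cvg_cst.
exact: cvgMl_tmp H.
Qed.

Lemma a_le f i M N : span_pointwise K f h ->
  (forall m, (N <= m)%N -> nrm (f m) <= M) -> a i <= M.
Proof.
move=> pw HM; have [G [Gs Gi <-]] := interpF i.
rewrite (V2 Gi Gs); apply: (ler_cvg_to (lim_u (s := G) pw)); first exact: cvg_cst.
near=> m; have Nm : (N <= m)%N by near: m; exact: nbhs_infty_ge.
rewrite key_u; have := nrm_ge0 (span_sub (f m) G); have := HM m Nm; lra.
Unshelve. all: by end_near.
Qed.

Lemma a_le_r f r i : span_pointwise K f h ->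
  (fun n => nrm (f n)) @ \oo --> r -> a i <= r.
Proof.
move=> pw Hr; have [G [Gs Gi <-]] := interpF i.
rewrite (V2 Gi Gs); apply: (ler_cvg_to (lim_u (s := G) pw)); first exact: Hr.
near=> m; rewrite key_u; have := nrm_ge0 (span_sub (f m) G); lra.
Unshelve. all: by end_near.
Qed.

Lemma ReM2 (z : R[i]) : complex.Re (2 * z) = 2 * complex.Re z.
Proof. by case: z => x y /=; ring. Qed.

Lemma para b c : nrm b <= 2 * nrm c + 2 * nrm (span_sub b c).
Proof.
have := nrm_ge0 (span_sub b (scal 2 c)); rewrite !nrm_sub ip_scalr.
have -> : nrm (scal 2 c) = 2 * (2 * nrm c).
  by rewrite /nrm !norm2E ip_scall ip_scalr rmorph_nat !ReM2.
rewrite ReM2; lra.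
Qed.

Lemma bound_of_rkhs : in_rkhs K h -> exists M, forall i, a i <= M.
Proof.
case=> f [cf pw]; have [N HN] := cf 1 ltr01.
exists (2 * nrm (f N) + 2) => i; apply: (a_le i (N := N) pw) => m Nm.
have H1 : nrm (span_sub (f m) (f N)) < 1 := HN m N Nm (leqnn N).
have := para (f m) (f N); lra.
Qed.


Lemma supp (s : span_elt R X) : exists i, forall p, p \in s -> p.1 \in F i.
Proof.
elim: s => [|q s [i Hi]]; first by exists 0%N.
have [j qj] := Fcov q.1; exists (maxn i j) => p; rewrite inE => /orP[/eqP -> | ps].
  exact: (fsubsetP (Fmono (leq_maxr i j))).
by apply: (fsubsetP (Fmono (leq_maxl i j))); exact: Hi.
Qed.

Lemma a_cvg r : rkhs_norm2_is K h r -> a @ \oo --> r.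
Proof.
case=> f [cf pw Hr].
have ale : forall i, a i <= r := fun i => a_le_r i pw Hr.
have near_r : forall e, 0 < e -> exists i, r - e <= a i.
  move=> e e0; have [N HN] := cf e e0.
  have [i Hi] := supp (f N).
  exists i; have [G [Gs Gi <-]] := interpF i.
  apply: le_trans (V1 Gi Hi).
  have Hr' : (fun m => nrm (f m) - e) @ \oo --> r - e.
    rewrite (_ : (fun m => _) = (fun m => nrm (f m)) - (fun _ => e)); last by apply: funext.
    exact: cvgB Hr (cvg_cst e).
  apply: (ler_cvg_to Hr' (lim_u (s := f N) pw)).
  near=> m; have Nm : (N <= m)%N by near: m; exact: nbhs_infty_ge.
  rewrite key_u; have : nrm (span_sub (f m) (f N)) < e := HN m N Nm (leqnn N).
  lra.
apply/cvgrPdist_le => e e0; have [i Hi] := near_r e e0.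
near=> n; have ni : (i <= n)%N by near: n; exact: nbhs_infty_ge.
have := a_mono ni; have := ale n.
rewrite ler_norml => h1 h2; apply/andP; split; lra.
Unshelve. all: by end_near.
Qed.

Lemma nrm_subC s t : nrm (span_sub s t) = nrm (span_sub t s).
Proof. rewrite !nrm_sub (ipR_sym s t); lra. Qed.

Lemma rkhs_of_bound : (exists M, forall i, a i <= M) -> in_rkhs K h.
Proof.
case=> M HM.
have [g gP] := choice interpF.
have gd : forall m n, (m <= n)%N -> nrm (span_sub (g m) (g n)) = a n - a m.
  move=> m n mn; have [ms mi mN] := gP m; have [ns ni nN] := gP n.
  rewrite nrm_sub (ip_supp ni (s := g m)); last first.
    by move=> p /ms; apply/fsubsetP/Fmono.
  have := V2 mi ms; rewrite mN nN; lra.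
exists g; split.
  move=> e e0.
  have ac : a @ \oo --> sup (range a).
    apply: nondecreasing_cvgn; first exact: a_mono.
    by exists M => _ [n _ <-]; exact: HM.
  have e20 : 0 < e / 2 by rewrite divr_gt0.
  move/cvgrPdist_lt: ac => /(_ _ e20) [N _ HN].
  exists N => m n Nm Nn; rewrite -/(nrm _).
  have hm := HN m Nm; have hn := HN n Nn; rewrite /= in hm hn.
  have [mn|nm] := leqP m n.
    rewrite gd //; move: hm hn; rewrite !ltr_norml => /andP[? ?] /andP[? ?]; lra.
  rewrite nrm_subC gd; last exact: ltnW.
  move: hm hn; rewrite !ltr_norml => /andP[? ?] /andP[? ?]; lra.
move=> z e e0; have [i zi] := Fcov z.
exists i => n ni; have [_ gi _] := gP n.
rewrite gi; first by rewrite subrr normr0 ltcR.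
exact: (fsubsetP (Fmono ni)).
Qed.

End Main.

Unset Implicit Arguments.
Close Scope complex_scope.

Theorem corollary8p8 (R : realType) (X : countType) (K : X -> X -> R[i])
  (F : nat -> {fset X}) :
  pos_def_kernel K ->
  (forall x : X, in_rkhs K (delta x)) ->
  (forall i : nat, (F i `<=` F i.+1)%fset) ->
  (forall x : X, exists i : nat, x \in F i) ->
  forall h : X -> R[i],
    (in_rkhs K h <-> exists M : R, forall i : nat, approx_norm2 K (F i) h <= M) /\
    (in_rkhs K h ->
       {homo (fun i => approx_norm2 K (F i) h) : m n / (m <= n)%N >-> m <= n} /\
       forall r : R, rkhs_norm2_is K h r ->
         (fun i => approx_norm2 K (F i) h) @ \oo --> r).
Proof.
move=> pdK dl Fs Fcov h; split.
  split; first exact: (bound_of_rkhs pdK dl).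
  exact: (rkhs_of_bound pdK dl Fs Fcov).
move=> _; split; first exact: (a_mono pdK dl Fs).
by move=> r; exact: (a_cvg pdK dl Fs Fcov).
Qed.
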